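(* Let $p$ be a positive random partition ($p_N(\pi)>0$ for all $N,\pi$) that generates the potential for TU games, and let $r^p$ be the restriction operator $$w^{r^p}_{-i}(S,\pi)=\frac{n}{n-s}\sum_{B\in\pi\cup\{\emptyset\}}\frac{p_N(\{S\}\cup\pi_{+i\leadsto B})}{p_{N\setminus\{i\}}(\{S\}\cup\pi)}\,w(S,\pi_{+i\leadsto B}).$$ Then (i) the $r^p$-Shapley value equals the $p$-Shapley value, $\mathrm{Sh}^{r^p}=\mathrm{Sh}^p$, where $$\mathrm{Sh}^p_i(w)=\sum_{(T,\tau)\in\mathcal{E}(N\setminus\{i\})}\Big(p_N(\{T\cup\{i\}\}\cup\tau)\,w(T\cup\{i\},\tau)-\frac{t}{n-t}\sum_{B\in\tau\cup\{\emptyset\}}p_N(\{T\}\cup\tau_{+i\leadsto B})\,w(T,\tau_{+i\leadsto B})\Big);$$ (ii) for TU games, $\mathrm{Sh}^{r^p}(v)=\mathrm{Sh}(v)$ for all $N\subseteq\mathbf{U}$ and all TU games $v$ on $N$.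
   Context: $\mathbf{U}$ is a finite set of players; cardinalities of $N,S,T,B$ are $n,s,t,b$. $\Pi(N)$ is the set of partitions of $N$ ($\Pi(\emptyset)=\{\emptyset\}$). A random partition is $p=(p_N)_{N\subseteq\mathbf{U}}$ with $p_N$ a probability distribution on $\Pi(N)$. $\pi_{+i\leadsto B}=(\pi\setminus\{B\})\cup\{B\cup\{i\}\}$ for $B\in\pi$, and $\pi_{+i\leadsto\emptyset}=\pi\cup\{\{i\}\}$. TU game on $N$: $v:2^N\to\mathbb{R}$, $v(\emptyset)=0$. Shapley value: $\mathrm{Sh}_i(v)=\sum_{S\subseteq N\setminus\{i\}}\frac{s!(n-s-1)!}{n!}(v(S\cup\{i\})-v(S))$. Potential: $\mathrm{Pot}(v)=\sum_{\emptyset\ne S\subseteq N}\frac{(s-1)!(n-s)!}{n!}v(S)$. Embedded coalitions $\mathcal{E}(N)=\{(S,\pi):S\subseteq N,\pi\in\Pi(N\setminus S)\}$. A TUX game on $N$ is $w:\mathcal{E}(N)\to\mathbb{R}$ with $w(\emptyset,\pi)=0$; $\mathbb{W}(N)$ is their set; a TU game $v$ is identified with the TUX game $w(S,\pi)=v(S)$. $\mathrm{E}_p(w)=\sum_{\pi\in\Pi(N)}p_N(\pi)\sum_{S\in\pi}w(S,\pi\setminus\{S\})$; $p$ generates the potential for TU games if $\mathrm{E}_p(v)=\mathrm{Pot}(v)$ for all TU games $v$. The formula for $w^{r^p}_{-i}$ is for all $N\subseteq\mathbf{U}$, $w\in\mathbb{W}(N)$, $i\in N$, $(S,\pi)\in\mathcal{E}(N\setminus\{i\})$,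 and defines $w^{r^p}_{-i}\in\mathbb{W}(N\setminus\{i\})$; this operator is path independent ($(w_{-i})_{-j}=(w_{-j})_{-i}$), so removal of a set $T$ of players, $w^{r^p}_{-T}$, is well defined. For such a path independent restriction operator $r$, the $r$-Shapley value is $\mathrm{Sh}^r(w)=\mathrm{Sh}(v^r_w)$, where $v^r_w(S)=w^r_{-(N\setminus S)}(S,\emptyset)$ for $S\subseteq N$. *)

(* Defs.v *)
From mathcomp Require Import all_boot all_order all_algebra.
Set Implicit Arguments. Unset Strict Implicit. Unset Printing Implicit Defensive.
Import Order.TTheory GRing.Theory Num.Theory.
Local Open Scope ring_scope.

Section Defs.
Variables (R : realFieldType) (U : finType).

(* Values of p N outside Pi(N) are irrelevant. *)
Definition random_partition (p : {set U} -> {set {set U}} -> R) : Prop :=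
  forall N : {set U},
    (forall pi, partition pi N -> 0 <= p N pi) /\
    \sum_(pi : {set {set U}} | partition pi N) p N pi = 1.

Definition positive_rp (p : {set U} -> {set {set U}} -> R) : Prop :=
  forall N pi, partition pi N -> 0 < p N pi.

(* TU games on N: v : 2^N -> R with v(set0) = 0 (values outside 2^N irrelevant). *)
Definition Pot (N : {set U}) (v : {set U} -> R) : R :=
  \sum_(S : {set U} | (S \subset N) && (S != set0))
     ((#|S|.-1)`! * (#|N| - #|S|)`!)%:R / (#|N|`!)%:R * v S.

Definition Ep (p : {set U} -> {set {set U}} -> R) (N : {set U})
    (w : {set U} -> {set {set U}} -> R) : R :=
  \sum_(pi : {set {set U}} | partition pi N)
     p N pi * \sum_(S in pi) w S (pi :\ S).

Definition tux_of_tu (v : {set U} -> R) : {set U} -> {set {set U}} -> R :=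
  fun S _ => v S.

Definition generates_potential (p : {set U} -> {set {set U}} -> R) : Prop :=
  forall (N : {set U}) (v : {set U} -> R), v set0 = 0 ->
    Ep p N (tux_of_tu v) = Pot N v.

(* TUX game on N: w(set0, pi) = 0 for every embedded coalition (set0, pi),
   pi in Pi(N). Values outside E(N) are irrelevant. *)
Definition tux_game (N : {set U}) (w : {set U} -> {set {set U}} -> R) : Prop :=
  forall pi, partition pi N -> w set0 pi = 0.

(* pi_{+i ~> B}; B = set0 means i forms a new singleton block *)
Definition plus_to (pi : {set {set U}}) (i : U) (B : {set U}) : {set {set U}} :=
  if B == set0 then [set i] |: pi else (i |: B) |: (pi :\ B).

Definition restr (p : {set U} -> {set {set U}} -> R) (N : {set U})
    (w : {set U} -> {set {set U}} -> R) (i : U) : {set U} -> {set {set U}} -> R :=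
  fun S pi =>
    (#|N|%:R / (#|N| - #|S|)%:R) *
    \sum_(B in pi :|: [set set0])
       (p N (S |: plus_to pi i B) / p (N :\ i) (S |: pi)) * w S (plus_to pi i B).

Fixpoint remove_seq (p : {set U} -> {set {set U}} -> R) (N : {set U})
    (w : {set U} -> {set {set U}} -> R) (s : seq U) : {set U} -> {set {set U}} -> R :=
  match s with
  | [::] => w
  | j :: s' => remove_seq p (N :\ j) (restr p N w j) s'
  end.

(* w_{-T} (removal in the enumeration order of T; path independence makes
   the order irrelevant) *)
Definition remove_set p N w (T : {set U}) := remove_seq p N w (enum T).

Definition Shapley (N : {set U}) (v : {set U} -> R) (i : U) : R :=
  \sum_(S : {set U} | S \subset N :\ i)
     ((#|S|`! * (#|N| - #|S| - 1)`!)%:R / (#|N|`!)%:R) * (v (i |: S) - v S).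

Definition v_of (p : {set U} -> {set {set U}} -> R) (N : {set U})
    (w : {set U} -> {set {set U}} -> R) : {set U} -> R :=
  fun S => remove_set p N w (N :\: S) S set0.

Definition rShapley p N w (i : U) : R := Shapley N (v_of p N w) i.

Definition pShapley (p : {set U} -> {set {set U}} -> R) (N : {set U})
    (w : {set U} -> {set {set U}} -> R) (i : U) : R :=
  \sum_(T : {set U} | T \subset N :\ i)
   \sum_(tau : {set {set U}} | partition tau ((N :\ i) :\: T))
     ( p N ((i |: T) |: tau) * w (i |: T) tau
       - (#|T|%:R / (#|N| - #|T|)%:R) *
         \sum_(B in tau :|: [set set0]) p N (T |: plus_to tau i B) * w T (plus_to tau i B)).

End Defs.

(* Main.v *)
Require Import Defs.
From mathcomp Require Import all_boot all_order all_algebra.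
Import Order.TTheory GRing.Theory Num.Theory.
Set Implicit Arguments. Unset Strict Implicit.

Section SetLemmas.
Variable U : finType.
Implicit Types (X N S B : {set U}) (P sigma tau : {set {set U}}).

Lemma part_add N S sigma : S != set0 -> S \subset N ->
  partition sigma (N :\: S) -> partition (S |: sigma) N /\ S \notin sigma.
Proof.
move=> S0 SN hs; split.
  have := partitionU1 hs S0.
  have -> : S :|: (N :\: S) = N by rewrite setDE setUIr setUCr setIT; apply/setUidPr.
  apply; rewrite -setI_eq0; apply/eqP/setP=> x; rewrite !inE.
  by case: (x \in S); rewrite ?andbF.
apply/negP=> hS; have := partitionS hs hS.
case/set0Pn: S0 => x xS /subsetP /(_ x xS); by rewrite inE xS.
Qed.

Lemma plus_part X tau j B : j \notin X -> partition tau X ->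
  B \in tau :|: [set set0] -> partition (plus_to tau j B) (j |: X).
Proof.
move=> jX ht; rewrite /plus_to; case: eqP => [-> _|B0].
  apply: partitionU1 => //; first by apply/set0Pn; exists j; rewrite inE.
  by rewrite disjoints1.
rewrite !inE => /orP[] hB; last by case: B0; apply/eqP.
have h1 := partitionD1 ht hB.
have BX := partitionS ht hB.
have := partitionU1 h1 (_ : j |: B != set0).
have -> : (j |: B) :|: (X :\: B) = j |: X.
  apply/setP=> x; rewrite !inE; case: (x == j) => //=.
  by case xB: (x \in B) => //=; rewrite (subsetP BX x xB).
apply; first by apply/set0Pn; exists j; rewrite setU11.
rewrite -setI_eq0; apply/eqP/setP=> x; rewrite !inE.
case: eqP => [->|] /=; first by rewrite (negbTE jX) !andbF.
by case: (x \in B).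
Qed.

Definition unplus sigma (j : U) : {set {set U}} * {set U} :=
  let P := pblock sigma j in
  (if P :\ j == set0 then sigma :\ P else (P :\ j) |: (sigma :\ P), P :\ j).

Lemma unplusK X tau j B : j \notin X -> partition tau X ->
  B \in tau :|: [set set0] -> unplus (plus_to tau j B) j = (tau, B).
Proof.
move=> jX ht hB.
have hs := plus_part jX ht hB.
have tI := partition_trivIset hs.
have jnot : forall C, C \in tau -> j \notin C.
  by move=> C Ct; apply: contra jX; apply: subsetP; apply: partitionS ht Ct.
rewrite /unplus /plus_to /=; have [B0|B0] := eqVneq B set0.
  rewrite ?B0 ?eqxx.
  have ->: pblock ([set j] |: tau) j = [set j].
    by apply: def_pblock; rewrite ?setU11 ?set11 //; move: hs; rewrite /plus_to B0 eqxx => /partition_trivIset.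
  rewrite setDv eqxx; congr pair; apply: setU1K.
  by apply/negP => /jnot; rewrite inE eqxx.
rewrite ?(negbTE B0).
rewrite !inE in hB; case/orP: hB => hB; last by case/negP: B0.
have BX := partitionS ht hB.
have jB : j \notin B by apply: jnot.
have ->: pblock ((j |: B) |: (tau :\ B)) j = j |: B.
  by apply: def_pblock; rewrite ?setU11 //; move: hs; rewrite /plus_to (negbTE B0) => /partition_trivIset.
rewrite setU1K // (negbTE B0); congr pair.
rewrite setU1K ?setD1K //.
by rewrite !inE negb_and; apply/orP; right; apply/negP => /jnot; rewrite setU11.
Qed.

Lemma unplus_surj X sigma j : j \notin X -> partition sigma (j |: X) ->
  [/\ partition (unplus sigma j).1 X, (unplus sigma j).2 \in (unplus sigma j).1 :|: [set set0]
   & plus_to (unplus sigma j).1 j (unplus sigma j).2 = sigma].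
Proof.
move=> jX hs.
have tI := partition_trivIset hs.
have jc : j \in cover sigma by rewrite (cover_partition hs) setU11.
set P := pblock sigma j.
have Ps : P \in sigma := pblock_mem jc.
have jP : j \in P by rewrite mem_pblock.
have hD := partitionD1 hs Ps.
have PjX : P :\ j \subset X.
  apply/subsetP => x; rewrite !inE => /andP[xj xP].
  by have := subsetP (partitionS hs Ps) x xP; rewrite !inE (negbTE xj).
rewrite /unplus -/P /=; case: eqP => [B0|B0] /=.
  have PE : P = [set j].
    apply/setP => x; rewrite inE; apply/idP/eqP => [xP|->//].
    apply/eqP; apply: contraT => xj.
    have : x \in P :\ j by rewrite !inE xj xP.
    by rewrite B0 inE.
  split.
  - move: hD; rewrite PE; congr partition.
    by apply/setP => x; rewrite !inE; case: eqP => // ->; rewrite (negbTE jX).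
  - by rewrite B0 !inE eqxx orbT.
  by rewrite /plus_to B0 eqxx -PE setD1K.
have Pn : P :\ j \notin sigma :\ P.
  rewrite !inE negb_and; apply/orP; right; apply/negP => hB.
  have /set0Pn [x xB] : P :\ j != set0 by apply/eqP.
  have e1 := def_pblock tI hB xB.
  have e2 := def_pblock tI Ps (subsetP (subsetDl P [set j]) x xB).
  by move: jP; rewrite -e2 e1 !inE eqxx.
split.
- have := partitionU1 hD (introN eqP B0).
  have -> : (P :\ j) :|: ((j |: X) :\: P) = X.
    apply/setP => x; rewrite !inE; case: eqP => [->|xj] /=; first by rewrite (negbTE jX) jP.
    case xP: (x \in P) => //=.
    by have := subsetP (partitionS hs Ps) x xP; rewrite !inE (introF eqP xj).
  apply; rewrite -setI_eq0; apply/eqP/setP => x; rewrite !inE.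
  by case: (x \in P); rewrite ?andbF.
- by rewrite !inE eqxx.
rewrite /plus_to (introF eqP B0) setD1K // setU1K // setD1K //.
Qed.


Lemma sum_with_aux N S sigma : S != set0 -> S \subset N ->
  (partition (S |: sigma) N && (S \in S |: sigma)) && ((S |: sigma) :\ S == sigma)
  = partition sigma (N :\: S).
Proof.
move=> S0 SN; rewrite setU11 andbT.
apply/andP/idP => [[h1 /eqP h2]| h].
  by rewrite -h2; exact: partitionD1 h1 (setU11 _ _).
by have [h1 h2] := part_add S0 SN h; rewrite h1 setU1K.
Qed.

End SetLemmas.

From mathcomp.algebra_tactics Require Import ring.
Local Open Scope ring_scope.

Section Sums.
Variables (R : realFieldType) (U : finType).
Implicit Types (X N S B : {set U}) (P sigma tau : {set {set U}}).

Lemma sum_plus X j (F : {set {set U}} -> R) : j \notin X ->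
  \sum_(tau | partition tau X) \sum_(B in tau :|: [set set0]) F (plus_to tau j B)
  = \sum_(sigma | partition sigma (j |: X)) F sigma.
Proof.
move=> jX; rewrite pair_big_dep /=.
rewrite (reindex_onto (fun x : {set {set U}} * {set U} => plus_to x.1 j x.2)
                      (fun s => unplus s j)) /=; last first.
  by move=> s hs; case: (unplus_surj jX hs).
apply: eq_bigl => [[t B]] /=.
apply/andP/andP => [[h1 h2]|[h1 /eqP h2]].
  split; first exact: plus_part.
  by rewrite (unplusK jX h1 h2).
have [h3 h4 _] := unplus_surj jX h1.
by rewrite h2 in h3 h4.
Qed.

Lemma sum_with N S (F : {set {set U}} -> R) : S != set0 -> S \subset N ->
  \sum_(pi | partition pi N && (S \in pi)) F pi
  = \sum_(sigma | partition sigma (N :\: S)) F (S |: sigma).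
Proof.
move=> S0 SN.
rewrite (reindex_onto (fun s => S |: s) (fun pi => pi :\ S)) /=; last first.
  by move=> pi /andP[_ h]; rewrite setD1K.
by apply: eq_bigl => s; rewrite sum_with_aux.
Qed.

End Sums.

Section Num.
Variable R : realFieldType.

Lemma nat_neq0 (k : nat) : (0 < k)%N -> (k%:R : R) != 0.
Proof. by move=> h; rewrite pnatr_eq0 -lt0n. Qed.

Lemma fact_neq0 (k : nat) : (k`!%:R : R) != 0.
Proof. exact/nat_neq0/fact_gt0. Qed.

Lemma num1 (n t : nat) : (t < n)%N ->
  (t`! * (n - t - 1)`!)%:R / (n`!)%:R * ('C(n, t.+1)%:R * (t.+1)%:R) = 1 :> R.
Proof.
move=> tn; have h := bin_fact tn.
have e : (n - t.+1 = n - t - 1)%N by rewrite subnS subn1.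
rewrite e factS in h; rewrite -h !natrM.
have c0 : ('C(n, t.+1)%:R : R) != 0 by apply: nat_neq0; rewrite bin_gt0.
have := fact_neq0 t; have := fact_neq0 (n - t - 1); have := @nat_neq0 t.+1 isT.
move=> h1 h2 h3; field.
by rewrite ?c0 ?h1 ?h2 ?h3 /= ?[1 + _]addrC ?natr1 ?nat_neq0.
Qed.

Lemma num2 (n t : nat) : (t < n)%N ->
  (t`! * (n - t - 1)`!)%:R / (n`!)%:R * ('C(n, t)%:R * t%:R) = t%:R / (n - t)%:R :> R.
Proof.
move=> tn; have h := bin_fact (ltnW tn).
have e : (n - t = (n - t - 1).+1)%N by rewrite subn1 prednK // subn_gt0.
set k := (n - t - 1)%N in e *.
rewrite e factS in h; rewrite -h e !natrM.
have c0 : ('C(n, t)%:R : R) != 0 by apply: nat_neq0; rewrite bin_gt0 ltnW.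
have := fact_neq0 t; have := fact_neq0 (n - t - 1); have := @nat_neq0 (n - t - 1).+1 isT.
move=> h1 h2 h3; field.
by rewrite ?c0 ?h1 ?h2 ?h3 /= ?[1 + _]addrC ?natr1 ?nat_neq0.
Qed.

Lemma num3 (n s : nat) : (0 < s)%N -> (s <= n)%N ->
  'C(n, s)%:R * s%:R * (((s.-1)`! * (n - s)`!)%:R / (n`!)%:R) = 1 :> R.
Proof.
move=> s0 sn; have h := bin_fact sn.
have e : s = (s.-1).+1 by rewrite prednK.
rewrite [in s`!]e factS -e in h; rewrite -h !natrM.
have c0 : ('C(n, s)%:R : R) != 0 by apply: nat_neq0; rewrite bin_gt0.
have := fact_neq0 s.-1; have := fact_neq0 (n - s); have := @nat_neq0 s s0.
move=> h1 h2 h3; field.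
by rewrite ?c0 ?h1 ?h2 ?h3 /= ?[1 + _]addrC ?natr1 ?nat_neq0.
Qed.

Lemma num4 (m s : nat) (Y : R) : (s <= m)%N ->
  'C(m, s)%:R * s%:R * ((m.+1)%:R / (m.+1 - s)%:R * Y) = 'C(m.+1, s)%:R * s%:R * Y.
Proof.
move=> sm; have h := mul_bin_down m.+1 s.
have hR := congr1 (fun k => k%:R : R) h; rewrite /= !natrM in hR.
have nz : ((m.+1 - s)%:R : R) != 0 by apply: nat_neq0; rewrite subn_gt0 ltnS.
have e : ('C(m.+1, s)%:R : R) = (m.+1)%:R * 'C(m, s)%:R / (m.+1 - s)%:R.
  by rewrite hR [X in X / _]mulrC mulfK.
rewrite e; field; exact: nz.
Qed.

End Num.

Section Main.
Variables (R : realFieldType) (U : finType) (p : {set U} -> {set {set U}} -> R).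
Hypotheses (hpos : positive_rp p) (hgen : generates_potential p).
Implicit Types (X N S B : {set U}) (P sigma tau : {set {set U}}).

Lemma marg N S : S != set0 -> S \subset N ->
  \sum_(sigma | partition sigma (N :\: S)) p N (S |: sigma)
  = ((#|S|.-1)`! * (#|N| - #|S|)`!)%:R / (#|N|`!)%:R.
Proof.
move=> S0 SN; rewrite -sum_with //.
pose v := fun X : {set U} => ((X == S)%:R : R).
have hv : v set0 = 0 by rewrite /v eq_sym (negbTE S0).
have hP : Pot N v = ((#|S|.-1)`! * (#|N| - #|S|)`!)%:R / (#|N|`!)%:R.
  rewrite /Pot (bigD1 S) /=; last by rewrite SN S0.
  rewrite /v eqxx mulr1 big1 ?addr0 // => X /andP[_ /negbTE ->]; by rewrite mulr0.
have := hgen N hv; rewrite hP /Ep /tux_of_tu /v.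
move=> <-; rewrite big_mkcondr /=; apply: eq_bigr => pi _.
case: (boolP (S \in pi)) => h.
  rewrite (bigD1 S) //= eqxx big1 ?addr0 ?mulr1 // => B /andP[_ /negbTE ->] //.
rewrite big1 ?mulr0 // => B BP; case: eqP => // e; by rewrite -e BP in h.
Qed.

Lemma pSS S : S != set0 -> p S [set S] = (#|S|%:R)^-1.
Proof.
move=> S0; have := marg S0 (subxx S).
rewrite setDv (eq_bigl (fun s => s == set0)); last by move=> s; rewrite partition_set0.
rewrite big_pred1_eq setU0 subnn => ->.
have s0 : (0 < #|S|)%N by rewrite card_gt0.
have e : #|S| = (#|S|.-1).+1 by rewrite prednK.
rewrite [in #|S|`!]e factS -e natrM.
have := fact_neq0 R #|S|.-1; have := nat_neq0 R s0; move=> h1 h2.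
by rewrite fact0 natrM mulr1; field; rewrite h1 h2.
Qed.

Lemma remove_main s : forall N w S, uniq s -> S != set0 -> S \subset N ->
  (forall x, (x \in s) = (x \in N :\: S)) ->
  remove_seq p N w s S set0 = 'C(#|N|, #|S|)%:R * #|S|%:R *
     \sum_(sigma | partition sigma (N :\: S)) (p N (S |: sigma) * w S sigma).
Proof.
elim: s => [|j s IH] N w S us S0 SN hs /=.
  have ND : N :\: S = set0 by apply/setP => x; rewrite -hs inE.
  have NS : N = S.
    apply/eqP; rewrite eqEsubset SN andbT; apply/subsetP => x xN.
    apply: contraT => xS; have : x \in N :\: S by rewrite inE xS xN.
    by rewrite ND inE.
  subst N; rewrite ND (eq_bigl (fun s => s == set0)); last by move=> s; rewrite partition_set0.
  rewrite big_pred1_eq setU0 binn pSS // mul1r.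
  have s0 : (0 < #|S|)%N by rewrite card_gt0.
  have := nat_neq0 R s0 => h; by field.
case/andP: us => js us.
have jNS : j \in N :\: S by rewrite -hs inE eqxx.
have jN : j \in N by move: jNS; rewrite inE => /andP[].
have jS : j \notin S by move: jNS; rewrite inE => /andP[].
have SN' : S \subset N :\ j.
  apply/subsetP => x xS; rewrite !inE (subsetP SN x xS) andbT.
  by apply: contraNneq jS => <-.
rewrite IH //; last first.
  move=> x; have := hs x; rewrite !inE.
  case: (eqVneq x j) => [->|xj] /=; last by [].
  by rewrite (negbTE js) (negbTE jS).
have hX : j |: ((N :\ j) :\: S) = N :\: S.
  apply/setP => x; rewrite !inE; case: (eqVneq x j) => [->|] //=.
  by rewrite jS jN.
have jX : j \notin (N :\ j) :\: S by rewrite !inE eqxx andbF.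
rewrite -hX -(sum_plus (fun sigma => p N (S |: sigma) * w S sigma) jX).
have E : \sum_(sigma | partition sigma ((N :\ j) :\: S))
           p (N :\ j) (S |: sigma) * restr p N w j S sigma =
         (#|N|%:R / (#|N| - #|S|)%:R) *
         \sum_(tau | partition tau ((N :\ j) :\: S))
           \sum_(B in tau :|: [set set0]) p N (S |: plus_to tau j B) * w S (plus_to tau j B).
  rewrite mulr_sumr; apply: eq_bigr => sg hsg.
  rewrite /restr mulrCA; congr (_ * _); rewrite mulr_sumr; apply: eq_bigr => B _.
  have := hpos (part_add S0 SN' hsg).1 => /lt0r_neq0 h.
  by field.
rewrite E.
have cN : #|N| = #|N :\ j|.+1 by rewrite (cardsD1 j N) jN.
rewrite cN num4 //.
by rewrite -ltnS -cN; apply: proper_card; apply/properP; split => //; exists j.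
Qed.

Lemma remove_empty s : forall N w, uniq s -> (forall x, (x \in s) = (x \in N)) ->
  (forall sigma, partition sigma N -> w set0 sigma = 0) ->
  remove_seq p N w s set0 set0 = 0.
Proof.
elim: s => [|j s IH] N w us hs hw /=.
  have ND : N = set0 by apply/setP => x; rewrite -hs inE.
  by apply: hw; rewrite ND partition_set0.
case/andP: us => js us.
have jN : j \in N by rewrite -hs inE eqxx.
apply: IH => //.
  move=> x; have := hs x; rewrite !inE.
  case: (eqVneq x j) => [->|xj] /=; last by [].
  by rewrite (negbTE js).
move=> sg hsg; rewrite /restr big1 ?mulr0 // => B hB.
rewrite hw ?mulr0 //.
have := plus_part (negbT (setD11 j N)) hsg hB.
by rewrite setD1K.
Qed.

Lemma v_of_E N w S : tux_game N w -> S \subset N ->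
  v_of p N w S = 'C(#|N|, #|S|)%:R * #|S|%:R *
     \sum_(sigma | partition sigma (N :\: S)) (p N (S |: sigma) * w S sigma).
Proof.
move=> hw SN; rewrite /v_of /remove_set.
case: (eqVneq S set0) => [->|S0].
  rewrite cards0 mulr0 mul0r; apply: remove_empty => //; first exact: enum_uniq.
  by move=> x; rewrite mem_enum setD0.
apply: remove_main => //; first exact: enum_uniq.
by move=> x; rewrite mem_enum.
Qed.

End Main.

Section Final.
Variables (R : realFieldType) (U : finType) (p : {set U} -> {set {set U}} -> R).
Hypotheses (hpos : positive_rp p) (hgen : generates_potential p).

Lemma vo_tu (N : {set U}) (v : {set U} -> R) (S : {set U}) : v set0 = 0 -> S \subset N ->
  v_of p N (tux_of_tu v) S = v S.
Proof.
move=> v0 SN.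
have hw : tux_game N (tux_of_tu v) by move=> pi _; exact: v0.
rewrite (v_of_E hpos hgen hw SN).
case: (eqVneq S set0) => [->|S0]; first by rewrite cards0 mulr0 mul0r v0.
rewrite /tux_of_tu -mulr_suml marg // mulrA num3 ?mul1r //.
  by rewrite card_gt0.
exact: subset_leq_card.
Qed.

Lemma part1 (N : {set U}) (w : {set U} -> {set {set U}} -> R) (i : U) : tux_game N w -> i \in N -> rShapley p N w i = pShapley p N w i.
Proof.
move=> hw iN.
rewrite /rShapley /Shapley /pShapley; apply: eq_bigr => T hT.
have iT : i \notin T by apply/negP => /(subsetP hT); rewrite !inE eqxx.
have TN : T \subset N by apply: subset_trans hT (subsetDl _ _).
have iTN : i |: T \subset N by rewrite subUset sub1set iN TN.
have tn : (#|T| < #|N|)%N by rewrite (cardsD1 i N) iN add1n ltnS subset_leq_card.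
rewrite (v_of_E hpos hgen hw iTN) (v_of_E hpos hgen hw TN) sumrB.
have hX : i |: ((N :\ i) :\: T) = N :\: T.
  apply/setP => x; rewrite !inE; case: (eqVneq x i) => [->|] //=.
  by rewrite (negbTE iT) iN.
have jX : i \notin (N :\ i) :\: T by rewrite !inE eqxx andbF.
rewrite -[in RHS]mulr_sumr.
rewrite (sum_plus (fun sigma => p N (T |: sigma) * w T sigma) jX) hX.
rewrite -setDDl cardsU1 iT add1n mulrBr; congr (_ - _).
  by rewrite mulrA num1 // mul1r.
by rewrite mulrA num2.
Qed.

End Final.

Unset Implicit Arguments.

Theorem corollary2 (R : realFieldType) (U : finType)
    (p : {set U} -> {set {set U}} -> R)
    (hp : random_partition p) (hpos : positive_rp p)
    (hgen : generates_potential p) :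
  (forall (N : {set U}) (w : {set U} -> {set {set U}} -> R) (i : U),
      tux_game N w -> i \in N -> rShapley p N w i = pShapley p N w i) /\
  (forall (N : {set U}) (v : {set U} -> R) (i : U),
      v set0 = 0 -> i \in N -> rShapley p N (tux_of_tu v) i = Shapley N v i).
Proof.
split; first by move=> N w i; exact: part1.
move=> N v i v0 iN; rewrite /rShapley /Shapley; apply: eq_bigr => S hS.
have iS : i \notin S by apply/negP => /(subsetP hS); rewrite !inE eqxx.
have SN : S \subset N by apply: subset_trans hS (subsetDl _ _).
have iSN : i |: S \subset N by rewrite subUset sub1set iN SN.
by rewrite !(vo_tu hpos hgen).
Qed.
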